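(* Let $\mathcal F_n$ be a class of real-valued functions of $v$, and let $\{q_{k,n,\jmath}\}$, $1\le \jmath\le \mathcal J$, $1\le k\le k_{n,\jmath}$, be functions satisfying $\sup_{1\le k\le k_{n,\jmath}}\sup_{P\in\mathbf P}\|q_{k,n,\jmath}\|_{L^\infty_P}\le B_n$ for all $1\le\jmath\le\mathcal J$, with $B_n\ge 1$. Define $$\mathcal G_n\equiv\{f(x)q_{k,n,\jmath}(z_\jmath): f\in\mathcal F_n,\ 1\le\jmath\le\mathcal J,\ 1\le k\le k_{n,\jmath}\}.$$ Then for all $\epsilon>0$ and all $P\in\mathbf P$, $$N_{[\,]}(\epsilon,\mathcal G_n,\|\cdot\|_{L^2_P})\le k_n\times N_{[\,]}(\epsilon/B_n,\mathcal F_n,\|\cdot\|_{L^2_P}).$$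
   Context: Observations are $V=(X,Z)$ with $X\in\mathbf R^{d_x}$ and $Z=(Z_1,\dots,Z_{\mathcal J})$, $Z_\jmath\in\mathbf R^{d_{z_\jmath}}$; $\mathbf P$ is a family of distributions of $V$. $k_n\equiv\sum_{\jmath=1}^{\mathcal J}k_{n,\jmath}$. For $q\ge1$, $\|f\|_{L^q_P}^q=E_P|f(V)|^q$. An $\epsilon$-bracket under $\|\cdot\|_{L^2_P}$ is a set $\{f: L\le f\le U\}$ with $\|U-L\|_{L^2_P}<\epsilon$; $N_{[\,]}(\epsilon,\mathcal G,\|\cdot\|_{L^2_P})$ is the smallest number of $\epsilon$-brackets needed to cover $\mathcal G$. *)

(* Defs.v *)
From HB Require Import structures.
From mathcomp Require Import all_boot all_order all_algebra.
From mathcomp Require Import all_classical all_reals all_analysis.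
Set Implicit Arguments. Unset Strict Implicit. Unset Printing Implicit Defensive.
Import Order.TTheory GRing.Theory Num.Theory.
Local Open Scope classical_set_scope.
Local Open Scope ring_scope.

Definition LpNorm d (T : measurableType d) (R : realType)
  (P : probability T R) (p : \bar R) (g : T -> R) : \bar R :=
  Lnorm P p (EFin \o g).

Definition bracket_cover d (T : measurableType d) (R : realType)
  (P : probability T R) (eps : R) (G : set (T -> R)) (n : nat) : Prop :=
  exists (L U : 'I_n -> T -> R),
    (forall i, measurable_fun setT (L i) /\ measurable_fun setT (U i) /\
       (LpNorm P 2%:E (fun v => (U i v - L i v)%R) < eps%:E)%E) /\
    (forall g, G g -> exists i : 'I_n, forall v, L i v <= g v <= U i v).

(* Bracketing number N_[](eps, G, L^2_P): the smallest such n, +oo if none. *)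
Definition bracketing_number d (T : measurableType d) (R : realType)
  (P : probability T R) (eps : R) (G : set (T -> R)) : \bar R :=
  ereal_inf [set (n%:R)%:E | n in [set n | bracket_cover P eps G n]].

Definition product_class d (T : measurableType d) (R : realType)
  (J : nat) (kn : 'I_J -> nat) (dz : 'I_J -> measure_display)
  (Tz : forall j : 'I_J, measurableType (dz j))
  (zproj : forall j : 'I_J, T -> Tz j)
  (q : forall j : 'I_J, 'I_(kn j) -> Tz j -> R)
  (F : set (T -> R)) : set (T -> R) :=
  [set g | exists f, F f /\ exists (j : 'I_J) (k : 'I_(kn j)),
     g = (fun v => f v * q j k (zproj j v))].

(* Main.v *)
Require Import Defs.
From HB Require Import structures.
From mathcomp Require Import all_boot all_order all_algebra.
From mathcomp Require Import all_classical all_reals all_analysis.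
From mathcomp Require Import measurable_realfun.
Import Order.TTheory GRing.Theory Num.Theory.
Local Open Scope classical_set_scope.
Local Open Scope ring_scope.

Lemma L2_le (R : realType) d (T : measurableType d) (P : probability T R)
  (w h : T -> R) (B : R) : 0 <= B -> measurable_fun setT w ->
  measurable_fun setT h -> {ae P, forall x, `|w x| <= B * `|h x|} ->
  (LpNorm P 2%:E w <= B%:E * LpNorm P 2%:E h)%E.
Proof.
move=> B0 mw mh hae.
rewrite /LpNorm unlock /Lnorm /=.
have -> : B%:E = ((B `^ 2)%:E `^ 2^-1)%E.
  by rewrite poweR_EFin -powRrM mulfV// powRr1.
have i0 : forall g : T -> R, (0 <= \int[P]_x (`|g x| `^ 2)%:E)%E.
  by move=> g; apply: integral_ge0 => x _; rewrite lee_fin powR_ge0.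
rewrite -poweRM ?lee_fin ?powR_ge0//.
apply: gt0_ler_poweR.
- by rewrite invr_ge0.
- by rewrite in_itv /= leey andbT.
- by rewrite in_itv /= leey andbT mule_ge0 ?lee_fin ?powR_ge0.
have mp : forall g : T -> R, measurable_fun setT g ->
    measurable_fun [set: T] (fun x => ((`|g x| `^ 2)%:E : \bar R)).
  move=> g mg; apply/measurable_EFinP.
  have -> : (fun x => `|g x| `^ 2) = (@powR R ^~ 2) \o (Num.norm \o g) by [].
  apply: measurableT_comp; first exact: measurable_powR.
  exact: measurableT_comp.
have h0 : forall x, [set: T] x -> (0 <= (`|h x| `^ 2)%:E)%E.
  by move=> x _; rewrite lee_fin powR_ge0.
rewrite -(@ge0_integralZl_EFin _ _ _ P setT measurableT _ h0 (mp h mh) (B `^ 2) (powR_ge0 _ _)).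
apply: ae_ge0_le_integral => //.
all: try (move=> x _; rewrite ?lee_fin ?powR_ge0//).
- exact: mp.
- by rewrite mulr_ge0 ?powR_ge0.
- apply: measurable_funeM; exact: mp.
apply: filterS hae => x hx _.
rewrite -EFinM lee_fin -powRM//.
by rewrite ge0_ler_powR// ?mulr_ge0// nnegrE ?mulr_ge0.
Qed.

Lemma cover_fin (R : realType) d (T : measurableType d) (P : probability T R)
  (eps : R) (G : set (T -> R)) (I : finType) (m : nat) (hc : #|I| = m)
  (L U : I -> T -> R) :
  (forall i, measurable_fun setT (L i) /\ measurable_fun setT (U i) /\
       (LpNorm P 2%:E (fun v => (U i v - L i v)%R) < eps%:E)%E) ->
  (forall g, G g -> exists i : I, forall v, L i v <= g v <= U i v) ->
  bracket_cover P eps G m.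
Proof.
move=> H1 H2.
exists (fun i => L (enum_val (cast_ord (esym hc) i))),
       (fun i => U (enum_val (cast_ord (esym hc) i))).
split; first by move=> i; exact: H1.
move=> g /H2 [i hi]; exists (cast_ord hc (enum_rank i)).
by rewrite cast_ordK enum_rankK.
Qed.

Lemma minmax_mul (R : realType) (a b x c : R) : a <= x <= b ->
  Num.min (a * c) (b * c) <= x * c <= Num.max (a * c) (b * c).
Proof.
move=> /andP[ax xb].
have [c0|c0] := leP 0 c.
  have h1 : a * c <= x * c by rewrite ler_wpM2r.
  have h2 : x * c <= b * c by rewrite ler_wpM2r.
  by rewrite ge_min le_max h1 h2 orbT.
have h1 : x * c <= a * c by rewrite ler_wnM2r// ltW.
have h2 : b * c <= x * c by rewrite ler_wnM2r// ltW.
by rewrite ge_min le_max h1 h2 !orbT.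
Qed.

Lemma maxmin_abs (R : realType) (a b : R) : `|Num.max a b - Num.min a b| = `|b - a|.
Proof.
rewrite maxEle minEle; case: ifP => // _; by rewrite distrC.
Qed.

Lemma prod_cover (R : realType) (d : measure_display) (T : measurableType d)
  (J : nat) (dz : 'I_J -> measure_display)
  (Tz : forall j : 'I_J, measurableType (dz j))
  (zproj : forall j : 'I_J, T -> Tz j)
  (hzproj : forall j, measurable_fun setT (zproj j))
  (F : set (T -> R)) (kn : 'I_J -> nat)
  (q : forall j : 'I_J, 'I_(kn j) -> Tz j -> R)
  (hqm : forall j k, measurable_fun setT (q j k))
  (B : R) (hB1 : 1 <= B) (P : probability T R)
  (hqB : forall (j : 'I_J) (k : 'I_(kn j)),
     (LpNorm P +oo%E (q j k \o zproj j) <= B%:E)%E) (eps : R) (n : nat) :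
  bracket_cover P (eps / B) F n ->
  bracket_cover P eps (product_class zproj q F) ((\sum_(j < J) kn j) * n)%N.
Proof.
move=> [L [U [H1 H2]]].
have B0 : 0 < B by apply: lt_le_trans hB1.
pose I := ({j : 'I_J & 'I_(kn j)} * 'I_n)%type.
have hc : #|{: I}| = ((\sum_(j < J) kn j) * n)%N.
  rewrite card_prod card_ord card_tagged sumnE big_map big_enum /=.
  by congr (_ * _)%N; apply: eq_bigr => j _; rewrite card_ord.
pose qz (i : I) := q (tag i.1) (tagged i.1) \o zproj (tag i.1).
apply: (@cover_fin R d T P eps _ I _ hc
  (fun i v => Num.min (L i.2 v * qz i v) (U i.2 v * qz i v))
  (fun i v => Num.max (L i.2 v * qz i v) (U i.2 v * qz i v))).
- move=> i.
  have mq : measurable_fun setT (qz i).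
    exact: measurableT_comp (hqm _ _) (hzproj _).
  have [mL [mU hn]] := H1 i.2.
  have mLq : measurable_fun setT (fun v => L i.2 v * qz i v).
    exact: measurable_funM.
  have mUq : measurable_fun setT (fun v => U i.2 v * qz i v).
    exact: measurable_funM.
  have mmin : measurable_fun setT
      (fun v => Num.min (L i.2 v * qz i v) (U i.2 v * qz i v)).
    exact: measurable_minr.
  have mmax : measurable_fun setT
      (fun v => Num.max (L i.2 v * qz i v) (U i.2 v * qz i v)).
    exact: measurable_maxr.
  split => //; split => //.
  have hae : {ae P, forall x, `|qz i x| <= B}.
    have := hqB (tag i.1) (tagged i.1).
    rewrite /LpNorm unlock /Lnorm /= ifT; last first.
      by have := probability_setT P => /= ->; rewrite lte01.
    move/ess_sup_inf.ess_supP; apply: filterS => x /=.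
    by rewrite lee_fin.
  apply: (le_lt_trans (@L2_le _ _ _ P (fun v => Num.max (L i.2 v * qz i v) (U i.2 v * qz i v) - Num.min (L i.2 v * qz i v) (U i.2 v * qz i v)) (fun v => U i.2 v - L i.2 v) B _ _ _ _)).
  + exact: ltW.
  + exact: measurable_funB.
  + exact: measurable_funB.
  + apply: filterS hae => x hx.
    rewrite maxmin_abs -mulrBl normrM mulrC.
    by rewrite ler_wpM2r.
  have -> : eps%:E = (B%:E * (eps / B)%:E)%E.
    by rewrite -EFinM mulrC divfK// gt_eqF.
  by rewrite lte_pmul2l.
- move=> g [f [Ff [j [k ->]]]].
  have [i hi] := H2 f Ff.
  exists (Tagged (fun j => 'I_(kn j)) k, i) => v.
  exact: minmax_mul.
Qed.

Theorem lemmaB1 (R : realType) (d : measure_display) (T : measurableType d)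
  (J : nat) (dz : 'I_J -> measure_display)
  (Tz : forall j : 'I_J, measurableType (dz j))
  (zproj : forall j : 'I_J, T -> Tz j)
  (hzproj : forall j, measurable_fun setT (zproj j))
  (Ps : set (probability T R))
  (F : set (T -> R)) (kn : 'I_J -> nat)
  (q : forall j : 'I_J, 'I_(kn j) -> Tz j -> R)
  (hqm : forall j k, measurable_fun setT (q j k))
  (B : R) (hB1 : 1 <= B)
  (hqB : forall (P : probability T R), Ps P -> forall (j : 'I_J) (k : 'I_(kn j)),
     (LpNorm P +oo%E (q j k \o zproj j) <= B%:E)%E) :
  forall (eps : R), 0 < eps -> forall (P : probability T R), Ps P ->
    (bracketing_number P eps (product_class zproj q F)
     <= ((\sum_(j < J) kn j)%N%:R)%:E * bracketing_number P (eps / B) F)%E.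
Proof.
move=> eps eps0 P PsP.
have hqB' := hqB P PsP.
case: (pselect (exists n, bracket_cover P (eps / B) F n)) => [[n0 hn0]|nocov].
  pose p := fun n => `[< bracket_cover P (eps / B) F n >].
  have ex : exists n, p n by exists n0; apply/asboolP.
  have [n /asboolP hn hmin] := find_ex_minn ex.
  apply: (@le_trans _ _ ((((\sum_(j < J) kn j) * n)%N%:R)%:E)).
    apply: ge_ereal_inf; exists (((\sum_(j < J) kn j) * n)%N%:R)%:E => //.
    exists ((\sum_(j < J) kn j) * n)%N => //.
    exact: (@prod_cover R d T J dz Tz zproj hzproj F kn q hqm B hB1 P hqB' eps n hn).
  rewrite natrM EFinM; apply: lee_wpmul2l; first by rewrite lee_fin ler0n.
  apply: le_ereal_inf_tmp => _ [m hm <-].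
  by rewrite lee_fin ler_nat; apply: hmin; apply/asboolP.
have -> : bracketing_number P (eps / B) F = +oo%E.
  rewrite /bracketing_number.
  have -> : [set (n%:R)%:E | n in [set n | bracket_cover P (eps / B) F n]]
      = (set0 : set (\bar R)).
    apply/seteqP; split => // x [n hn _]; apply: nocov; by exists n.
  exact: ereal_inf0.
have [S0|Spos] := eqVneq (\sum_(j < J) kn j)%N 0%N; last first.
  by rewrite gt0_muley ?leey// lte_fin ltr0n lt0n.
rewrite S0 mul0e.
apply: ge_ereal_inf; exists 0%E => //; exists 0%N => //.
exists (fun _ _ => 0), (fun _ _ => 0); split; first by case.
move=> g [f [_ [j [k _]]]]; exfalso.
have : (kn j <= \sum_(j < J) kn j)%N by rewrite (bigD1 j) //= leq_addr.
by rewrite S0 leqn0 => /eqP e; case: k; rewrite e.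
Qed.
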